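(* Let $T$ be $\mathcal{P}_{\mathsf{fs}}$ or $\mathcal{P}_{\mathsf{ufs}}$ on $\mathsf{Nom}$. If a locally monotone endofunctor $H$ on $\mathrm{Kl}(T)$ has an initial algebra $(\mu H,\iota)$, then $(\mu H,\iota^{-1})$ is a terminal $H$-coalgebra.
   Context: Fix a countably infinite set $\mathbb{A}$ of names; $\mathsf{Nom}$ is the category of nominal sets (sets with an action of the group of finite permutations of $\mathbb{A}$ in which every element has finite support) and equivariant maps. For a nominal set $X$, $\mathcal{P}_{\mathsf{fs}}X$ (resp. $\mathcal{P}_{\mathsf{ufs}}X$) is the nominal set of finitely supported subsets (resp. uniformly finitely supported subsets, i.e. subsets $A$ with $\bigcup_{x\in A}\mathrm{supp}(x)$ finite), with the action $\pi\cdot A=\{\pi\cdot x\}$; these are monads on $\mathsf{Nom}$ with unit $x\mapsto\{x\}$ and multiplication union. The Kleisli category $\mathrm{Kl}(T)$ has nominal sets as objects and equivariant maps $X\to TY$ as morphisms $X\to Y$, composed by $g\bullet f(x)=\bigcup_{y\in f(x)}g(y)$. Hom-sets of $\mathrm{Kl}(T)$ are ordered pointwise by inclusion; $H$ is locally monotone if its action on each hom-set is monotone for this order. *)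

(* Defs.v *)
From Stdlib Require Import List.
Import ListNotations.


Record perm := Perm {
  pf : nat -> nat;
  pg : nat -> nat;
  pfg : forall a, pf (pg a) = a;
  pgf : forall a, pg (pf a) = a;
  pfin : exists l : list nat, forall a, ~ In a l -> pf a = a }.

Definition pid : perm.
Proof.
  refine (@Perm (fun a => a) (fun a => a) (fun _ => eq_refl) (fun _ => eq_refl) _).
  exists nil; intros a _; reflexivity.
Defined.

Definition pcomp (p q : perm) : perm.
Proof.
  refine (@Perm (fun a => pf p (pf q a)) (fun a => pg q (pg p a)) _ _ _).
  - intro a; rewrite (pfg q), (pfg p); reflexivity.
  - intro a; rewrite (pgf p), (pgf q); reflexivity.
  - destruct (pfin p) as [lp Hp]; destruct (pfin q) as [lq Hq].
    exists (lp ++ lq); intros a Ha.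
    rewrite Hq, Hp; [reflexivity| |]; intro Hin; apply Ha; apply in_or_app; auto.
Defined.

Definition pinv (p : perm) : perm.
Proof.
  refine (@Perm (pg p) (pf p) (pgf p) (pfg p) _).
  destruct (pfin p) as [l Hl]; exists l; intros a Ha.
  rewrite <- (Hl a Ha) at 1; apply pgf.
Defined.

Definition fixes (p : perm) (l : list nat) : Prop := forall a, In a l -> pf p a = a.

Definition supports {X : Type} (act : perm -> X -> X) (l : list nat) (x : X) : Prop :=
  forall p, fixes p l -> act p x = x.

Record NomSet := {
  ncar :> Type;
  nact : perm -> ncar -> ncar;
  nact_id : forall x, nact pid x = x;
  nact_comp : forall p q x, nact (pcomp p q) x = nact p (nact q x);
  nfs : forall x, exists l : list nat, supports nact l x }.

(* a \in supp(x): a belongs to every finite support of x (least support) *)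
Definition in_supp (X : NomSet) (x : ncar X) (a : nat) : Prop :=
  forall l, supports (nact X) l x -> In a l.

(* subsets of X and the action  pi . A = { pi . x | x in A } *)
Definition subset (X : NomSet) := X -> Prop.
Definition sact (X : NomSet) (p : perm) (A : subset X) : subset X :=
  fun y => A (nact X (pinv p) y).

Definition fs_subset (X : NomSet) (A : subset X) : Prop :=
  exists l : list nat, forall p, fixes p l -> sact X p A = A.

(* uniformly finitely supported subsets: \bigcup_{x in A} supp(x) is finite *)
Definition ufs_subset (X : NomSet) (A : subset X) : Prop :=
  exists l : list nat, forall x a, A x -> in_supp X x a -> In a l.

Inductive PowKind := Pfs | Pufs.

(* A is an element of T X, for T = P_fs or P_ufs *)
Definition Tsub (k : PowKind) (X : NomSet) (A : subset X) : Prop :=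
  match k with Pfs => fs_subset X A | Pufs => ufs_subset X A end.

(* a morphism X -> Y in Kl(T) is an equivariant map X -> T Y; we represent the
   underlying map x |-> f x as a relation and the morphism property as a predicate *)
Definition klrel (X Y : NomSet) := X -> subset Y.

Definition klhom (k : PowKind) (X Y : NomSet) (f : klrel X Y) : Prop :=
  (forall p x, f (nact X p x) = sact Y p (f x)) /\ (forall x, Tsub k Y (f x)).

Definition klid (X : NomSet) : klrel X X := fun x y => y = x.

Definition klcomp (X Y Z : NomSet) (g : klrel Y Z) (f : klrel X Y) : klrel X Z :=
  fun x z => exists y, f x y /\ g y z.

Arguments klcomp {X Y Z} g f _ _.

Definition klle (X Y : NomSet) (f g : klrel X Y) : Prop :=
  forall x y, f x y -> g x y.

Arguments klle {X Y} f g.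

Record KlEndo (k : PowKind) := {
  Hob : NomSet -> NomSet;
  Hmor : forall X Y : NomSet, klrel X Y -> klrel (Hob X) (Hob Y);
  Hmor_hom : forall X Y (f : klrel X Y),
      klhom k X Y f -> klhom k (Hob X) (Hob Y) (Hmor X Y f);
  Hmor_id : forall X, Hmor X X (klid X) = klid (Hob X);
  Hmor_comp : forall X Y Z (f : klrel X Y) (g : klrel Y Z),
      klhom k X Y f -> klhom k Y Z g ->
      Hmor X Z (klcomp g f) = klcomp (Hmor Y Z g) (Hmor X Y f) }.

Arguments Hob {k} _ _.
Arguments Hmor {k} _ {X Y} _ _ _.
Arguments Hmor_hom {k} _ {X Y} f _.

Definition locally_monotone (k : PowKind) (H : KlEndo k) : Prop :=
  forall X Y (f g : klrel X Y), klhom k X Y f -> klhom k X Y g ->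
    klle f g -> klle (Hmor H f) (Hmor H g).

Arguments locally_monotone {k} H.

Definition is_initial_algebra (k : PowKind) (H : KlEndo k) (mu : NomSet)
    (iota : klrel (Hob H mu) mu) : Prop :=
  klhom k (Hob H mu) mu iota /\
  forall (A : NomSet) (a : klrel (Hob H A) A), klhom k (Hob H A) A a ->
    exists h : klrel mu A,
      klhom k mu A h /\ klcomp h iota = klcomp a (Hmor H h) /\
      forall h' : klrel mu A, klhom k mu A h' ->
        klcomp h' iota = klcomp a (Hmor H h') -> h' = h.

Arguments is_initial_algebra {k} H mu iota.

Definition is_terminal_coalgebra (k : PowKind) (H : KlEndo k) (nu : NomSet)
    (c : klrel nu (Hob H nu)) : Prop :=
  klhom k nu (Hob H nu) c /\
  forall (B : NomSet) (b : klrel B (Hob H B)), klhom k B (Hob H B) b ->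
    exists h : klrel B nu,
      klhom k B nu h /\ klcomp c h = klcomp (Hmor H h) b /\
      forall h' : klrel B nu, klhom k B nu h' ->
        klcomp c h' = klcomp (Hmor H h') b -> h' = h.

Arguments is_terminal_coalgebra {k} H nu c.

(* Main.v *)
Require Import Defs.
From Stdlib Require Import List Arith Lia Classical FunctionalExtensionality PropExtensionality ProofIrrelevance.
Import ListNotations.

Lemma perm_ext (p q : perm) : (forall a, pf p a = pf q a) -> (forall a, pg p a = pg q a) -> p = q.
Proof.
  destruct p as [f g h1 h2 h3], q as [f' g' h1' h2' h3']; simpl; intros E1 E2.
  assert (f = f') by (apply functional_extensionality; auto).
  assert (g = g') by (apply functional_extensionality; auto).
  subst f' g'.
  rewrite (proof_irrelevance _ h1 h1'), (proof_irrelevance _ h2 h2'), (proof_irrelevance _ h3 h3').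
  reflexivity.
Qed.

Lemma act_inv_l (X : NomSet) p y : nact X (pinv p) (nact X p y) = y.
Proof.
  rewrite <- nact_comp.
  replace (pcomp (pinv p) p) with pid. apply nact_id.
  apply perm_ext; simpl; intros; symmetry; apply pgf.
Qed.

Lemma act_inv_r (X : NomSet) p y : nact X p (nact X (pinv p) y) = y.
Proof.
  rewrite <- nact_comp.
  replace (pcomp p (pinv p)) with pid. apply nact_id.
  apply perm_ext; simpl; intros; symmetry; apply pfg.
Qed.

Definition swapf a b c := if Nat.eqb c a then b else if Nat.eqb c b then a else c.

Lemma swapf_inv a b c : swapf a b (swapf a b c) = c.
Proof.
  unfold swapf.
  destruct (Nat.eqb_spec c a); [subst|].
  - rewrite Nat.eqb_refl. destruct (Nat.eqb_spec b a); subst; try rewrite Nat.eqb_refl; auto.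
  - destruct (Nat.eqb_spec c b); [subst|].
    + rewrite Nat.eqb_refl; auto.
    + apply Nat.eqb_neq in n; apply Nat.eqb_neq in n0; rewrite n, n0; auto.
Qed.

Definition swap (a b : nat) : perm.
Proof.
  refine (@Perm (swapf a b) (swapf a b) (swapf_inv a b) (swapf_inv a b) _).
  exists [a; b]. intros c Hc. unfold swapf.
  destruct (Nat.eqb_spec c a); [subst; simpl in Hc; tauto|].
  destruct (Nat.eqb_spec c b); [subst; simpl in Hc; tauto|]. reflexivity.
Defined.

Lemma fresh (l : list nat) : exists b, ~ In b l.
Proof.
  exists (S (fold_right plus 0 l)).
  assert (forall x, In x l -> x <= fold_right plus 0 l).
  { induction l; simpl; intros x Hx; [tauto|]. destruct Hx; [subst; lia|].
    specialize (IHl x H); lia. }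
  intro Hin; apply H in Hin; lia.
Qed.

Lemma Ukey (Y : NomSet) (A : subset Y) l U0 :
  (forall p, fixes p l -> sact Y p A = A) ->
  (forall y a, A y -> in_supp Y y a -> In a U0) ->
  forall y a, A y -> in_supp Y y a -> In a l.
Proof.
  intros Hl HU y a Ay Hs.
  destruct (classic (In a l)) as [|Hn]; auto. exfalso.
  destruct (fresh (a :: l ++ U0)) as [b Hb].
  assert (Hba : b <> a) by (intro; apply Hb; left; auto).
  assert (Hbl : ~ In b l) by (intro; apply Hb; right; apply in_or_app; auto).
  assert (HbU : ~ In b U0) by (intro; apply Hb; right; apply in_or_app; auto).
  set (t := swap a b).
  assert (Ht : fixes t l).
  { intros c Hc; simpl; unfold swapf.
    destruct (Nat.eqb_spec c a); [subst; tauto|].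
    destruct (Nat.eqb_spec c b); [subst; tauto|]. reflexivity. }
  assert (A2 : A (nact Y t y)).
  { rewrite <- (Hl t Ht). unfold sact. rewrite act_inv_l. exact Ay. }
  apply HbU. apply (HU _ b A2).
  intros l' Hl'.
  assert (Hsup : supports (nact Y) (map (pf t) l') y).
  { intros p Hp.
    set (q := pcomp t (pcomp p (pinv t))).
    assert (Hq : fixes q l').
    { intros c Hc. simpl.
      rewrite (Hp (swapf a b c)). apply swapf_inv.
      change (swapf a b c) with (pf t c). apply in_map; auto. }
    pose proof (Hl' q Hq) as E. unfold q in E.
    rewrite !nact_comp, act_inv_l in E.
    apply (f_equal (nact Y (pinv t))) in E. rewrite !act_inv_l in E. exact E. }
  apply Hs in Hsup. apply in_map_iff in Hsup. destruct Hsup as [c [Ec Hc]].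
  simpl in Ec. unfold swapf in Ec.
  destruct (Nat.eqb_spec c a); [subst; congruence|].
  destruct (Nat.eqb_spec c b); [subst; auto|]. congruence.
Qed.

Definition equiv (X Y : NomSet) (f : klrel X Y) := forall p x, f (nact X p x) = sact Y p (f x).
Definition supdec (X Y : NomSet) (f : klrel X Y) :=
  forall x y a, f x y -> in_supp Y y a -> in_supp X x a.
Definition Hm k X Y f := equiv X Y f /\ (k = Pufs -> supdec X Y f).

Lemma hom_iff k X Y f : klhom k X Y f <-> Hm k X Y f.
Proof.
  split.
  - intros [Heq Hts]. split; auto. intros ->. intros x y a Hxy Hs l Hl.
    specialize (Hts x); simpl in Hts. destruct Hts as [U0 HU].
    apply (Ukey Y (f x) l U0) with (y := y); auto.
    intros p Hp; rewrite <- Heq, (Hl p Hp); auto.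
  - intros [Heq Hsd]. split; auto. intros x. destruct (nfs X x) as [l Hl].
    destruct k; simpl.
    + exists l; intros p Hp; rewrite <- Heq, (Hl p Hp); auto.
    + exists l. intros y a Hy Hs. apply (Hsd eq_refl x y a Hy Hs l Hl).
Qed.

Lemma equiv_of X Y (f : klrel X Y) :
  (forall p x y, f x y -> f (nact X p x) (nact Y p y)) -> equiv X Y f.
Proof.
  intros H p x. apply functional_extensionality; intro y; apply propositional_extensionality.
  unfold sact; split; intro Hf.
  - apply (H (pinv p)) in Hf. rewrite act_inv_l in Hf. exact Hf.
  - apply (H p) in Hf. rewrite act_inv_r in Hf. exact Hf.
Qed.

Lemma equiv_use X Y (f : klrel X Y) p x y : equiv X Y f -> f x y -> f (nact X p x) (nact Y p y).
Proof. intros He Hf. rewrite He. unfold sact. rewrite act_inv_l. exact Hf. Qed.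

Lemma hom_id k X : klhom k X X (klid X).
Proof.
  apply hom_iff. split.
  - apply equiv_of. intros p x y ->. reflexivity.
  - intros _ x y a -> H; auto.
Qed.

Lemma hom_comp k X Y Z (f : klrel X Y) (g : klrel Y Z) :
  klhom k X Y f -> klhom k Y Z g -> klhom k X Z (klcomp g f).
Proof.
  rewrite !hom_iff. intros [Ef Sf] [Eg Sg]. split.
  - apply equiv_of. intros p x z [y [H1 H2]]. exists (nact Y p y).
    split; apply equiv_use; auto.
  - intros Hk x z a [y [H1 H2]] Hs. apply (Sf Hk x y a H1). apply (Sg Hk y z a H2 Hs).
Qed.

Definition bigU k {X Y} (P : klrel X Y -> Prop) : klrel X Y :=
  fun x y => exists f, P f /\ klhom k X Y f /\ f x y.
Definition bigI k {X Y} (P : klrel X Y -> Prop) : klrel X Y :=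
  fun x y => forall f, P f -> klhom k X Y f -> f x y.

Lemma hom_bigU k X Y (P : klrel X Y -> Prop) : klhom k X Y (bigU k P).
Proof.
  apply hom_iff. split.
  - apply equiv_of. intros p x y [f [Pf [Hf Hxy]]]. exists f; split; [|split]; auto.
    apply equiv_use; auto. apply hom_iff in Hf; apply Hf.
  - intros Hk x y a [f [Pf [Hf Hxy]]]. apply hom_iff in Hf. eapply (proj2 Hf); eauto.
Qed.

Lemma hom_bigI k X Y (P : klrel X Y -> Prop) f0 :
  P f0 -> klhom k X Y f0 -> klhom k X Y (bigI k P).
Proof.
  intros P0 H0. apply hom_iff. split.
  - apply equiv_of. intros p x y Hxy f Pf Hf.
    pose proof (Hxy f Pf Hf) as H1. apply hom_iff in Hf.
    apply equiv_use; auto. apply Hf.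
  - intros Hk x y a Hxy Hs. pose proof (Hxy f0 P0 H0) as H1. apply hom_iff in H0. exact (proj2 H0 Hk x y a H1 Hs).
Qed.

Lemma comp_assoc {W X Y Z : NomSet} (h : klrel Y Z) (g : klrel X Y) (f : klrel W X) :
  klcomp h (klcomp g f) = klcomp (klcomp h g) f.
Proof.
  apply functional_extensionality; intro x; apply functional_extensionality; intro z.
  apply propositional_extensionality; unfold klcomp; split.
  - intros [y [[w [H1 H2]] H3]]. exists w; split; auto. exists y; auto.
  - intros [w [H1 [y [H2 H3]]]]. exists y; split; auto. exists w; auto.
Qed.

Lemma comp_id_l {X Y : NomSet} (f : klrel X Y) : klcomp (klid Y) f = f.
Proof.
  apply functional_extensionality; intro x; apply functional_extensionality; intro z.
  apply propositional_extensionality; unfold klcomp, klid; split.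
  - intros [y [H1 ->]]; auto.
  - intros H; exists z; auto.
Qed.

Lemma comp_id_r {X Y : NomSet} (f : klrel X Y) : klcomp f (klid X) = f.
Proof.
  apply functional_extensionality; intro x; apply functional_extensionality; intro z.
  apply propositional_extensionality; unfold klcomp, klid; split.
  - intros [y [-> H]]; auto.
  - intros H; exists x; auto.
Qed.

Lemma le_antisym {X Y : NomSet} (f g : klrel X Y) : klle f g -> klle g f -> f = g.
Proof.
  intros H1 H2.
  apply functional_extensionality; intro x; apply functional_extensionality; intro z.
  apply propositional_extensionality; split; auto.
Qed.

Lemma comp_mono {X Y Z : NomSet} (f f' : klrel X Y) (g g' : klrel Y Z) :
  klle f f' -> klle g g' -> klle (klcomp g f) (klcomp g' f').
Proof. intros H1 H2 x z [y [A B]]. exists y; auto. Qed.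

Lemma le_refl {X Y : NomSet} (f : klrel X Y) : klle f f.
Proof. intros x y H; auto. Qed.

Theorem corollary3p8 (k : PowKind) (H : KlEndo k) (mu : NomSet)
    (iota : klrel (Hob H mu) mu) :
  locally_monotone H ->
  is_initial_algebra H mu iota ->
  (exists j : klrel mu (Hob H mu),
      klhom k mu (Hob H mu) j /\
      klcomp j iota = klid (Hob H mu) /\ klcomp iota j = klid mu) /\
  (forall j : klrel mu (Hob H mu),
      klhom k mu (Hob H mu) j ->
      klcomp j iota = klid (Hob H mu) -> klcomp iota j = klid mu ->
      is_terminal_coalgebra H mu j).
Proof.
  intros LM [Hi Init].
  destruct (Init mu iota Hi) as [h0 [Hh0 [Eh0 Uh0]]].
  assert (id_unique : forall f, klhom k mu mu f ->
            klcomp f iota = klcomp iota (Hmor H f) -> f = klid mu).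
  { intros f Hf Ef. rewrite (Uh0 f Hf Ef). symmetry. apply Uh0. apply hom_id.
    rewrite Hmor_id, comp_id_l, comp_id_r. reflexivity. }
  split.
  - destruct (Init (Hob H mu) (Hmor H iota) (Hmor_hom H iota Hi)) as [j [Hj [Ej _]]].
    exists j.
    assert (Eij : klcomp iota j = klid mu).
    { apply id_unique. apply hom_comp; auto.
      rewrite <- comp_assoc, Ej, <- (Hmor_comp k H _ _ _ j iota Hj Hi). reflexivity. }
    split; [auto|split; [|auto]].
    rewrite Ej, <- (Hmor_comp k H _ _ _ j iota Hj Hi), Eij, Hmor_id. reflexivity.
  - intros j Hj Eji Eij. split; auto. intros B b Hb.
    set (Psi := fun f : klrel B mu => klcomp iota (klcomp (Hmor H f) b)).
    assert (Psi_hom : forall f, klhom k B mu f -> klhom k B mu (Psi f)).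
    { intros f Hf. unfold Psi. apply hom_comp; auto. apply hom_comp; auto. apply Hmor_hom; auto. }
    assert (Psi_mono : forall f g, klhom k B mu f -> klhom k B mu g -> klle f g -> klle (Psi f) (Psi g)).
    { intros f g Hf Hg Hle. unfold Psi. apply comp_mono; [|apply le_refl].
      apply comp_mono; [apply le_refl|]. apply LM; auto. }
    set (Phi := fun f : klrel mu mu => klcomp iota (klcomp (Hmor H f) j)).
    assert (Phi_hom : forall f, klhom k mu mu f -> klhom k mu mu (Phi f)).
    { intros f Hf. unfold Phi. apply hom_comp; auto. apply hom_comp; auto. apply Hmor_hom; auto. }
    assert (Phi_mono : forall f g, klhom k mu mu f -> klhom k mu mu g -> klle f g -> klle (Phi f) (Phi g)).
    { intros f g Hf Hg Hle. unfold Phi. apply comp_mono; [|apply le_refl].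
      apply comp_mono; [apply le_refl|]. apply LM; auto. }
    assert (Key1 : forall m, klhom k mu mu m -> klle (Phi m) m -> klle (klid mu) m).
    { intros m Hm0 Pm.
      set (L := bigI k (fun f => klle (Phi f) f)).
      assert (Pid : klle (Phi (klid mu)) (klid mu)).
      { unfold Phi. rewrite Hmor_id, comp_id_l, Eij. apply le_refl. }
      assert (HL : klhom k mu mu L) by (apply (hom_bigI _ _ _ _ (klid mu)); auto; apply hom_id).
      assert (L1 : klle (Phi L) L).
      { intros x y Hxy f Pf Hf. apply Pf. apply (Phi_mono L f HL Hf); auto.
        intros x' y' H'; apply H'; auto. }
      assert (L2 : klle L (Phi L)).
      { intros x y Hxy. apply Hxy; [apply Phi_mono; auto|apply Phi_hom; auto]. }
      assert (EL : L = Phi L) by (apply le_antisym; auto).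
      assert (ELid : L = klid mu).
      { apply id_unique; auto.
        assert (E1 : klcomp L iota = klcomp (Phi L) iota) by (f_equal; exact EL).
        rewrite E1. unfold Phi. rewrite <- !comp_assoc, Eji, comp_id_r. reflexivity. }
      rewrite <- ELid. intros x y Hxy. apply Hxy; auto. }
    assert (Key2 : forall h1 h2, klhom k B mu h1 -> klhom k B mu h2 ->
              klcomp j h1 = klcomp (Hmor H h1) b -> klcomp j h2 = klcomp (Hmor H h2) b ->
              klle h1 h2).
    { intros h1 h2 H1 H2 C1 C2.
      set (m := bigU k (fun f => klle (klcomp f h1) h2)).
      assert (Hm0 : klhom k mu mu m) by apply hom_bigU.
      assert (Hmh : klle (klcomp m h1) h2).
      { intros x z [y [Hy [f [Pf [Hf Hfz]]]]]. apply Pf. exists y; auto. }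
      assert (Pm : klle (Phi m) m).
      { intros x y Hxy. exists (Phi m). split; [|split; [apply Phi_hom; auto|auto]].
        assert (E : klcomp (Phi m) h1 = klcomp iota (klcomp (Hmor H (klcomp m h1)) b)).
        { unfold Phi. rewrite <- !comp_assoc, C1.
          rewrite (comp_assoc (Hmor H m) (Hmor H h1) b).
          rewrite <- (Hmor_comp k H _ _ _ h1 m H1 Hm0). reflexivity. }
        rewrite E.
        assert (E2 : h2 = klcomp iota (klcomp (Hmor H h2) b)).
        { rewrite <- C2, comp_assoc, Eij, comp_id_l. reflexivity. }
        rewrite E2 at 1.
        apply comp_mono; [|apply le_refl]. apply comp_mono; [apply le_refl|].
        apply LM; auto. apply hom_comp; auto. }
      pose proof (Key1 m Hm0 Pm) as K.
      intros x y Hxy. apply Hmh. exists y. split; auto. apply K. reflexivity. }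
    set (G := bigU k (fun f => klle f (Psi f))).
    assert (HG : klhom k B mu G) by apply hom_bigU.
    assert (G1 : klle G (Psi G)).
    { intros x y [f [Pf [Hf Hfxy]]]. apply (Psi_mono f G Hf HG).
      - intros x' y' H'. exists f; auto.
      - apply Pf; auto. }
    assert (G2 : klle (Psi G) G).
    { intros x y H'. exists (Psi G). split; [|split; [apply Psi_hom; auto|auto]].
      apply Psi_mono; auto. }
    assert (EG : G = Psi G) by (apply le_antisym; auto).
    assert (CG : klcomp j G = klcomp (Hmor H G) b).
    { transitivity (klcomp j (Psi G)); [f_equal; exact EG|].
      unfold Psi. rewrite comp_assoc, Eji, comp_id_l. reflexivity. }
    exists G. split; [auto|split; [auto|]].
    intros h' Hh' C'. apply le_antisym; apply Key2; auto.
Qed.
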